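(* Consider a constrained online convex optimization problem: $\mathcal{F}\subset\mathbb{R}^d$ is a convex set with bounded $\ell_\infty$-diameter $D_\infty=\max_{\boldsymbol{x},\boldsymbol{y}\in\mathcal{F}}\Vert\boldsymbol{x}-\boldsymbol{y}\Vert_\infty$, and $f_1,\dots,f_T$ are convex loss functions with $\Vert\nabla f_t(\boldsymbol{\theta})\Vert_\infty\le G_\infty$ for all $t\in[T]$ and $\boldsymbol{\theta}\in\mathcal{F}$. Let the iterates be generated by AdaSGDMax with step size $\eta_t=\eta D_\infty/(G_\infty\sqrt{t\hat v_t})$ for some $\eta>0$, and assume $\hat v_1>0$. Then the regret $R_T:=\sum_{t=1}^T f_t(\boldsymbol{\theta}_t)-\min_{\boldsymbol{\theta}^*\in\mathcal{F}}\sum_{t=1}^T f_t(\boldsymbol{\theta}^* )$ satisfies $$R_T\le\frac{dD_\infty G_\infty\sqrt{\hat v_T T}}{2\eta}+\frac{dD_\infty G_\infty\eta(2\sqrt{T}-1)}{2\sqrt{\hat v_1}}.$$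
   Context: AdaSGDMax in the online setting: with $\boldsymbol{g}_t=\nabla f_t(\boldsymbol{\theta}_t)$, $v_0=0$, $\hat v_0=0$ and a fixed $\beta_2\in[0,1)$, set $v_t=\beta_2 v_{t-1}+(1-\beta_2)\Vert\boldsymbol{g}_t\Vert_2^2$, $\hat v_t=\max\{\hat v_{t-1},v_t\}$, and $\boldsymbol{\theta}_{t+1}=\Pi_{\mathcal{F}}(\boldsymbol{\theta}_t-\eta_t\boldsymbol{g}_t)$, where $\Pi_{\mathcal{F}}(\boldsymbol{x})=\arg\min_{\boldsymbol{y}\in\mathcal{F}}\Vert\boldsymbol{x}-\boldsymbol{y}\Vert_2$ is Euclidean projection and $\boldsymbol{\theta}_1\in\mathcal{F}$. *)

(* Defs.v *)
From mathcomp Require Import all_boot all_algebra all_classical all_reals all_analysis.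
Import GRing.Theory Num.Theory numFieldNormedType.Exports.
Set Implicit Arguments. Unset Strict Implicit. Unset Printing Implicit Defensive.
Local Open Scope ring_scope.
Local Open Scope classical_set_scope.

Section AdaSGDMaxDefs.
Variables (R : realType) (d : nat).

Definition dotv (x y : 'rV[R]_d) : R := \sum_(i < d) x ord0 i * y ord0 i.
Definition sqnorm2 (x : 'rV[R]_d) : R := \sum_(i < d) (x ord0 i) ^+ 2.
Definition norm2 (x : 'rV[R]_d) : R := Num.sqrt (sqnorm2 x).
Definition norminf (x : 'rV[R]_d) : R := \big[Num.max/0]_(i < d) `|x ord0 i|.

Definition convex_fun_on (F : set 'rV[R]_d) (f : 'rV[R]_d -> R) : Prop :=
  forall x y, F x -> F y -> forall l : R, 0 <= l <= 1 ->
    f (l *: x + (1 - l) *: y) <= l * f x + (1 - l) * f y.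

Definition is_gradient (f : 'rV[R]_d -> R) (x g : 'rV[R]_d) : Prop :=
  differentiable f x /\ forall v : 'rV[R]_d, 'd f x v = dotv g v.

Definition is_proj (F : set 'rV[R]_d) (x p : 'rV[R]_d) : Prop :=
  F p /\ forall y, F y -> norm2 (x - p) <= norm2 (x - y).

Definition is_linf_diameter (F : set 'rV[R]_d) (D : R) : Prop :=
  (forall x y, F x -> F y -> norminf (x - y) <= D) /\
  (exists x y, F x /\ F y /\ norminf (x - y) = D).

Fixpoint ada_v (b2 : R) (g : nat -> 'rV[R]_d) (t : nat) : R :=
  match t with
  | 0 => 0
  | t'.+1 => b2 * ada_v b2 g t' + (1 - b2) * sqnorm2 (g t)
  end.

Fixpoint ada_vhat (b2 : R) (g : nat -> 'rV[R]_d) (t : nat) : R :=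
  match t with
  | 0 => 0
  | t'.+1 => Num.max (ada_vhat b2 g t') (ada_v b2 g t)
  end.

End AdaSGDMaxDefs.

(* Main.v *)
Require Import Defs.
From mathcomp Require Import all_boot all_algebra all_classical all_reals all_analysis.
From mathcomp Require Import all_order ring lra.
Import GRing.Theory Num.Theory numFieldNormedType.Exports Order.TTheory.
Local Open Scope ring_scope.
Local Open Scope classical_set_scope.


Section S.
Context {R : realType} {d : nat}.
Implicit Types x y z : 'rV[R]_d.

Lemma convF (F : set 'rV[R]_d) x y (l : R) : convex_set F -> F x -> F y -> 0 <= l <= 1 ->
  F (l *: x + (1 - l) *: y).
Proof.
move=> cF Fx Fy /andP[l0 l1].
have := cF x y (Itv01 l0 l1); rewrite !inE => /(_ Fx Fy).
by [].
Qed.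

Lemma dotvC x y : dotv x y = dotv y x.
Proof. by apply: eq_bigr => i _; rewrite mulrC. Qed.
Lemma dotvDl x y z : dotv (x + y) z = dotv x z + dotv y z.
Proof. by rewrite /dotv -big_split; apply: eq_bigr => i _; rewrite mxE mulrDl. Qed.
Lemma dotvNl x y : dotv (- x) y = - dotv x y.
Proof. by rewrite /dotv -sumrN; apply: eq_bigr => i _; rewrite mxE mulNr. Qed.
Lemma dotvZl (a : R) x y : dotv (a *: x) y = a * dotv x y.
Proof. by rewrite /dotv mulr_sumr; apply: eq_bigr => i _; rewrite mxE mulrA. Qed.
Lemma dotvBl x y z : dotv (x - y) z = dotv x z - dotv y z.
Proof. by rewrite dotvDl dotvNl. Qed.
Lemma sqnormE x : sqnorm2 x = dotv x x.
Proof. by apply: eq_bigr => i _; rewrite expr2. Qed.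
Lemma sqnorm_ge0 x : 0 <= sqnorm2 x.
Proof. by apply: sumr_ge0 => i _; rewrite sqr_ge0. Qed.
Lemma sqnormD x y : sqnorm2 (x + y) = sqnorm2 x + 2 * dotv x y + sqnorm2 y.
Proof.
rewrite !sqnormE !dotvDl ![dotv _ (_ + _)]dotvC !dotvDl (dotvC y x); ring.
Qed.
Lemma sqnormZ (a : R) x : sqnorm2 (a *: x) = a ^+ 2 * sqnorm2 x.
Proof. by rewrite !sqnormE dotvZl dotvC dotvZl; ring. Qed.
Lemma sqnormN x : sqnorm2 (- x) = sqnorm2 x.
Proof. by rewrite -scaleN1r sqnormZ; ring. Qed.

Lemma proj_ineq (F : set 'rV[R]_d) x p y : convex_set F -> is_proj F x p -> F y ->
  sqnorm2 (p - y) <= sqnorm2 (x - y).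
Proof.
move=> cF [Fp Hp] Fy.
have key : dotv (x - p) (y - p) <= 0.
  rewrite leNgt; apply/negP => c0.
  set c := dotv (x - p) (y - p) in c0.
  set s := sqnorm2 (y - p).
  have s0 : 0 <= s by apply: sqnorm_ge0.
  set l := c / (c + s).
  have cs0 : 0 < c + s by lra.
  have l0 : 0 < l by rewrite divr_gt0.
  have l1 : l <= 1 by rewrite ler_pdivrMr // mul1r; lra.
  have Fz := @convF F y p l cF Fy Fp (introT andP (conj (ltW l0) l1)).
  have := Hp _ Fz; rewrite /norm2 ler_sqrt ?sqnorm_ge0 //.
  have -> : x - (l *: y + (1 - l) *: p) = (x - p) + (- l) *: (y - p).
    by apply/rowP => i; rewrite !mxE; ring.
  rewrite [sqnorm2 (_ + _ *: _)]sqnormD sqnormZ -/s.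
  rewrite [dotv _ _]dotvC dotvZl dotvC -/c.
  have hl : l * (c + s) = c by rewrite /l mulfVK // gt_eqF.
  nra.
have -> : x - y = (x - p) + (p - y) by rewrite addrA subrK.
rewrite [sqnorm2 (x - p + _)]sqnormD; have : dotv (x - p) (p - y) = - dotv (x - p) (y - p).
  by rewrite dotvC -opprB dotvNl dotvC.
move=> ->; have := sqnorm_ge0 (x - p); lra.
Qed.

Lemma grad_ineq (F : set 'rV[R]_d) f x y g : convex_fun_on F f -> F x -> F y ->
  is_gradient f x g -> dotv g (y - x) <= f y - f x.
Proof.
move=> cf Fx Fy [df Hd]; rewrite -Hd -deriveE //.
have cvfx := @diff_derivable _ _ _ f x (y - x) df.
rewrite /derive.
set G := (fun h : R => _).
have Hc : G @ 0^'+ --> lim (G @ 0^').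
  move=> A /cvfx /nbhs_ballP [_ /posnumP[e] xe_A].
  by exists e%:num => //= z xe_z; rewrite lt_def => /andP [xnez _]; apply: xe_A.
apply: (cvgr_to_le Hc).
near=> h.
have h0 : 0 < h by near: h; exact: nbhs_right_gt.
have h1 : h < 1 by near: h; apply: nbhs_right_lt.
rewrite /G /=.
have -> : h *: (y - x) + x = h *: y + (1 - h) *: x.
  by apply/rowP => i; rewrite !mxE; ring.
have := cf y x Fy Fx h; rewrite (ltW h0) (ltW h1) => /(_ isT) H.
rewrite -[_ *: _]/(h^-1 * _) ler_pdivrMl //; lra.
Unshelve. all: by end_near.
Qed.

Lemma norminf_ge0 x : 0 <= norminf x.
Proof. by rewrite /norminf; elim/big_ind: _ => //= a b a0 b0; rewrite le_max a0. Qed.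

Lemma coord_le x i : `|x ord0 i| <= norminf x.
Proof.
rewrite /norminf (bigD1 i) //= le_max lexx //.
Qed.

Lemma sqnorm_le x : sqnorm2 x <= d%:R * norminf x ^+ 2.
Proof.
rewrite /sqnorm2.
have -> : d%:R * norminf x ^+ 2 = \sum_(i < d) norminf x ^+ 2.
  by rewrite sumr_const card_ord mulr_natl.
apply: ler_sum => i _.
rewrite -(real_normK (num_real (x ord0 i))).
have := coord_le x i; have := normr_ge0 (x ord0 i); nra.
Qed.

Lemma norminf_eq x y : norminf (x - y) <= 0 -> x = y.
Proof.
move=> H; apply/rowP => j.
apply/eqP; rewrite -subr_eq0 -normr_le0.
have h := coord_le (x - y) j; rewrite !mxE in h; exact: (le_trans h H).
Qed.
End S.
Arguments grad_ineq {R d F f x y g}.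
Arguments proj_ineq {R d F x p y}.
Section Sc.
Variable R : realType.

Lemma sum_invsqrt (n : nat) :
  \sum_(1 <= t < n.+2) (Num.sqrt (t%:R : R))^-1 <= 2 * Num.sqrt (n.+1)%:R - 1.
Proof.
elim: n => [|n IH]; first by rewrite big_nat1 sqrtr1 invr1; lra.
rewrite big_nat_recr //=.
set s := Num.sqrt (n.+1)%:R : R in IH *.
set u := Num.sqrt (n.+2)%:R : R.
have hs : s ^+ 2 = (n.+1)%:R by rewrite sqr_sqrtr.
have hu : u ^+ 2 = (n.+2)%:R by rewrite sqr_sqrtr.
have s0 : 0 <= s by rewrite sqrtr_ge0.
have u0 : 0 < u by rewrite sqrtr_gt0 ltr0n.
have e : (n.+2)%:R = (n.+1)%:R + 1 :> R by rewrite -natr1.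
have hw : u^-1 * u = 1 by rewrite mulVf // gt_eqF.
have w0 : 0 < u^-1 by rewrite invr_gt0.
have h2 : 2 * s * u <= s ^+ 2 + u ^+ 2 by have := sqr_ge0 (s - u); nra.
have h3 : 0 <= u * (2 * u - 2 * s - u^-1) by nra.
have h4 : 0 <= 2 * u - 2 * s - u^-1 by rewrite -(pmulr_rge0 _ u0).
lra.
Qed.

Lemma telesc (a b : nat -> R) (M : R) (n : nat) :
  (forall t, 0 <= a t) -> (forall t, (1 <= t)%N -> a t <= M) ->
  (forall t, (1 <= t)%N -> 0 <= b t) -> (forall t, (1 <= t)%N -> b t <= b t.+1) ->
  \sum_(1 <= t < n.+2) (a t - a t.+1) * b t <= b n.+1 * M - b n.+1 * a n.+2.
Proof.
move=> a0 aM b0 bm.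
elim: n => [|n IH]; first by rewrite big_nat1; have := aM 1%N isT; have := b0 1%N isT; nra.
rewrite big_nat_recr //=.
have := aM n.+2 isT; have := a0 n.+2; have := bm n.+1 isT; have := b0 n.+1 isT; nra.
Qed.

Lemma scal (A S c G st sv s1 : R) : 0 <= A -> 0 < G -> 0 < st -> 0 < s1 -> s1 <= sv ->
  S <= c * G ^+ 2 -> 0 <= c ->
  A / (G * (st * sv)) * S / 2 <= c * A * G / (2 * s1) * st^-1.
Proof.
move=> A0 G0 st0 s10 s1v SG c0.
have sv0 : 0 < sv by lra.
set X := A / (G * (st * sv)).
have X0 : 0 <= X by rewrite /X divr_ge0 // ltW // !mulr_gt0.
have e1 : X * S / 2 <= X * (c * G ^+ 2) / 2.
  by rewrite ler_pM2r ?invr_gt0 // ler_wpM2l.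
apply: (le_trans e1).
have -> : X * (c * G ^+ 2) / 2 = (c * A * G / (2 * st)) * sv^-1.
  by rewrite /X; field; rewrite ?gt_eqF ?lt0r_neq0 //; lra.
have -> : c * A * G / (2 * s1) * st^-1 = (c * A * G / (2 * st)) * s1^-1.
  by field; rewrite ?gt_eqF //; lra.
apply: ler_wpM2l; first by rewrite divr_ge0 ?mulr_ge0 //; lra.
by rewrite lef_pV2 // posrE.
Qed.
End Sc.

Theorem corollary3p2p1 (R : realType) (d : nat) (F : set 'rV[R]_d)
  (Dinf Ginf eta beta2 : R)
  (f : nat -> 'rV[R]_d -> R) (grad : nat -> 'rV[R]_d -> 'rV[R]_d)
  (theta : nat -> 'rV[R]_d) (T : nat) :
  convex_set F ->
  is_linf_diameter F Dinf ->
  (forall t, convex_fun_on F (f t)) ->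
  (forall t x, F x -> is_gradient (f t) x (grad t x)) ->
  (forall t x, (1 <= t <= T)%N -> F x -> norminf (grad t x) <= Ginf) ->
  0 <= beta2 < 1 ->
  0 < eta ->
  F (theta 1%N) ->
  (forall t, (1 <= t)%N ->
     is_proj F
       (theta t - (eta * Dinf /
          (Ginf * Num.sqrt (t%:R * ada_vhat beta2 (fun s => grad s (theta s)) t)))
          *: grad t (theta t))
       (theta t.+1)) ->
  0 < ada_vhat beta2 (fun s => grad s (theta s)) 1 ->
  (1 <= T)%N ->
  forall theta_star, F theta_star ->
    \sum_(1 <= t < T.+1) f t (theta t) - \sum_(1 <= t < T.+1) f t theta_star <=
      d%:R * Dinf * Ginf
        * Num.sqrt (ada_vhat beta2 (fun s => grad s (theta s)) T * T%:R) / (2 * eta)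
      + d%:R * Dinf * Ginf * eta * (2 * Num.sqrt T%:R - 1)
        / (2 * Num.sqrt (ada_vhat beta2 (fun s => grad s (theta s)) 1)).
Proof.
move=> cF [Ddiam [x0 [y0 [Fx0 [Fy0 Dxy]]]]] cf Hgr HG /andP[b0 b1] eta0 Fth1 Hproj vh1 T1 ts Fts.
set gs := (fun s => grad s (theta s)) in Hproj vh1 *.
set vh := ada_vhat beta2 gs in Hproj vh1 *.
have vh_mono : forall t, vh t <= vh t.+1 by move=> t; rewrite /vh /= le_max lexx.
have vh_ge1 : forall t, (1 <= t)%N -> vh 1%N <= vh t.
  elim=> [//|[|t] IH _]; first by rewrite lexx.
  exact: le_trans (IH isT) (vh_mono _).
have thF : forall t, (1 <= t)%N -> F (theta t).
  elim=> [//|[|t] IH _]; first by [].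
  by case: (Hproj t.+1 isT).
have D0 : 0 <= Dinf by rewrite -Dxy norminf_ge0.
have G0 : 0 < Ginf.
  have N1 := HG 1%N (theta 1%N) (introT andP (conj isT T1)) Fth1.
  have N0 := norminf_ge0 (grad 1%N (theta 1%N)).
  rewrite ltNge; apply/negP => Gle.
  have Neq : norminf (grad 1%N (theta 1%N)) = 0 by lra.
  have S1 := sqnorm_le (grad 1%N (theta 1%N)); rewrite Neq in S1.
  have S0 := sqnorm_ge0 (grad 1%N (theta 1%N)).
  move: vh1; rewrite /vh /= /gs mulr0 add0r.
  rewrite lt_max ltxx /=; nra.
have [Dz|Dpos] := eqVneq Dinf 0.
  have eqts : forall t, (1 <= t)%N -> theta t = ts.
    by move=> t t1; apply: norminf_eq; rewrite -Dz; apply: Ddiam => //; apply: thF.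
  rewrite -sumrB big1_seq; last first.
    move=> t /andP[_]; rewrite mem_index_iota => /andP[t1 _].
    by rewrite eqts // subrr.
  by rewrite Dz !(mulr0, mul0r) addr0.
have Dp : 0 < Dinf by rewrite lt0r Dpos.
pose et := fun t : nat => eta * Dinf / (Ginf * Num.sqrt (t%:R * vh t)).
pose b := fun t : nat => Ginf * Num.sqrt (t%:R * vh t) / (2 * eta * Dinf).
pose a := fun t => sqnorm2 (theta t - ts).
pose M := d%:R * Dinf ^+ 2.
have vhp : forall t, (1 <= t)%N -> 0 < vh t by move=> t t1; exact: lt_le_trans vh1 (vh_ge1 t t1).
have sqp : forall t, (1 <= t)%N -> 0 < Num.sqrt (t%:R * vh t).
  by move=> t t1; rewrite sqrtr_gt0 mulr_gt0 ?ltr0n // vhp.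
have et0 : forall t, (1 <= t)%N -> 0 < et t.
  by move=> t t1; rewrite /et divr_gt0 ?mulr_gt0 // sqp.
have eb : forall t, (1 <= t)%N -> 2 * et t * b t = 1.
  move=> t t1; have := sqp t t1; rewrite /et /b => h.
  by field; rewrite ?gt_eqF ?mulr_gt0 //; lra.
have bge0 : forall t, (1 <= t)%N -> 0 <= b t.
  by move=> t t1; rewrite /b divr_ge0 ?mulr_ge0 ?sqrtr_ge0 //; lra.
have bm : forall t, (1 <= t)%N -> b t <= b t.+1.
  move=> t t1; rewrite /b ler_pM2r ?invr_gt0 ?mulr_gt0 // ler_pM2l //.
  rewrite ler_sqrt; last by rewrite mulr_ge0 // ltW // vhp.
  have := vhp t t1; have := vh_mono t; have : (t%:R : R) <= t.+1%:R by rewrite ler_nat.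
  have : (0 : R) <= t%:R by rewrite ler0n.
  nra.
have a0 : forall k, 0 <= a k by move=> k; exact: sqnorm_ge0.
have aM : forall t, (1 <= t)%N -> a t <= M.
  move=> t t1; apply: le_trans (sqnorm_le _) _; rewrite /M ler_wpM2l //.
  have := Ddiam _ _ (thF t t1) Fts; have := norminf_ge0 (theta t - ts); nra.
have step : forall t, (1 <= t)%N ->
    f t (theta t) - f t ts <= (a t - a t.+1) * b t + et t * sqnorm2 (gs t) / 2.
  move=> t t1.
  have g1 := grad_ineq (cf t) (thF t t1) Fts (Hgr t _ (thF t t1)).
  have p1 := proj_ineq cF (Hproj t t1) Fts.
  have E : forall (c : R) v, theta t - c *: v - ts = (theta t - ts) + (- c) *: v.
    by move=> c v; apply/rowP => i; rewrite !mxE; ring.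
  rewrite E -/(et t) -/(gs t) in p1.
  rewrite [sqnorm2 (_ + _ *: _)]sqnormD sqnormZ dotvC dotvZl in p1.
  have : dotv (grad t (theta t)) (ts - theta t) = - dotv (gs t) (theta t - ts).
    by rewrite -opprB dotvC dotvNl dotvC.
  move=> e; rewrite e in g1.
  set q := dotv (gs t) (theta t - ts) in p1 g1.
  set A0 := sqnorm2 (theta t - ts) in p1 *.
  set A1 := sqnorm2 (theta t.+1 - ts) in p1 *.
  set S := sqnorm2 (gs t) in p1 *.
  have h1 : 0 <= b t * (A0 + 2 * (- et t * q) + (- et t) ^+ 2 * S - A1).
    by rewrite mulr_ge0 ?bge0 // subr_ge0.
  have h2 : forall ee bb : R, bb * (A0 + 2 * (- ee * q) + (- ee) ^+ 2 * S - A1)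
     = (A0 - A1) * bb - (2 * ee * bb) * q + (2 * ee * bb) * (ee * S / 2).
    by move=> ee bb; field.
  rewrite h2 eb // !mul1r in h1.
  rewrite /a -/A0 -/A1; lra.
pose K := d%:R * (eta * Dinf) * Ginf / (2 * Num.sqrt (vh 1%N)).
have s1p : 0 < Num.sqrt (vh 1%N) by rewrite sqrtr_gt0.
have K0 : 0 <= K by rewrite /K divr_ge0 ?mulr_ge0 ?ler0n //; lra.
have step2 : forall t, (1 <= t <= T)%N ->
    et t * sqnorm2 (gs t) / 2 <= K * (Num.sqrt (t%:R : R))^-1.
  move=> t /andP[t1 tT].
  have -> : et t = eta * Dinf / (Ginf * (Num.sqrt t%:R * Num.sqrt (vh t))).
    by rewrite /et sqrtrM ?ler0n.
  rewrite /K; apply: scal; rewrite ?ler0n //.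
  - by rewrite mulr_ge0 //; lra.
  - by rewrite sqrtr_gt0 ltr0n.
  - by rewrite ler_sqrt ?vh_ge1 // ltW // vhp.
  - apply: le_trans (sqnorm_le _) _; rewrite ler_wpM2l //.
    have := HG t (theta t) (introT andP (conj t1 tT)) (thF t t1).
    have := norminf_ge0 (gs t); rewrite /gs; nra.
rewrite -sumrB.
have H : \sum_(1 <= t < T.+1) (f t (theta t) - f t ts) <=
   \sum_(1 <= t < T.+1) ((a t - a t.+1) * b t + et t * sqnorm2 (gs t) / 2).
  by apply: ler_sum_nat => t /andP[t1 _]; exact: step.
rewrite [X in _ <= X]big_split /= in H.
have H2 : \sum_(1 <= t < T.+1) (et t * sqnorm2 (gs t) / 2) <=
   \sum_(1 <= t < T.+1) (K * (Num.sqrt (t%:R : R))^-1).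
  by apply: ler_sum_nat => t /andP[t1 tT]; apply: step2; rewrite t1.
rewrite -mulr_sumr in H2.
have [n Tn] : exists n, T = n.+1 by exists T.-1; rewrite prednK.
rewrite Tn in H H2 *.
have P1 := @telesc R a b M n a0 aM bge0 bm.
have P3 := @sum_invsqrt R n.
have P4 : K * \sum_(1 <= t < n.+2) (Num.sqrt (t%:R : R))^-1 <= K * (2 * Num.sqrt (n.+1)%:R - 1).
  by rewrite ler_wpM2l.
have ba : 0 <= b n.+1 * a n.+2.
  have := bge0 n.+1 isT; have := a0 n.+2; nra.
have E1 : b n.+1 * M = d%:R * Dinf * Ginf * Num.sqrt (vh n.+1 * (n.+1)%:R) / (2 * eta).
  rewrite /b /M [vh n.+1 * _]mulrC; field; rewrite ?gt_eqF //; lra.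
have E2 : K * (2 * Num.sqrt (n.+1)%:R - 1) = d%:R * Dinf * Ginf * eta * (2 * Num.sqrt (n.+1)%:R - 1)
        / (2 * Num.sqrt (vh 1%N)).
  rewrite /K; field; rewrite ?gt_eqF //; lra.
rewrite -E1 -E2; lra.
Qed.
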